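(* Let $T\ge1$ and $N \ge T + \lfloor T^2/4\rfloor + 2$. In the polytope-code decoding setting described in the context, the set $V^*$ satisfies $|V^*| \ge N - T - \lfloor T^2/4\rfloor - 1$, and $\bar y_i = y_i$ for every $v_i\in V^*$. That is, the decoder identifies at least $N - T - \lfloor T^2/4 \rfloor - 1$ packets as received correctly, and all packets so identified are indeed correct.
   Context: Let $N_0\ge1$. An eligible $(N,N-T)$-generator matrix is an $N\times(N-T)$ matrix $A=(A_{ij})$ with nonnegative integer entries whose first $N-T$ rows form the identity matrix and such that every $(N-T)\times(N-T)$ submatrix obtained by choosing $N-T$ rows is nonsingular. Given $x_1,\dots,x_{N-T}\in\mathbb{Z}^{N_0}$, the transmitted codewords are $y_i = \sum_{j=1}^{N-T} A_{ij} x_j$, $i\in[N]$. The decoder receives $\bar y_1,\dots,\bar y_N\in\mathbb{Z}^{N_0}$ with $\bar y_i = y_i$ for all $i$ outside some unknown set of at most $T$ indices, and knows exactly $F_{ij}=\langle y_i,y_j\rangle$ for all $i,j\in[N]$ (in the code, the inner products $\langle x_i,x_j\rangle$ are included in every packet and recovered by majority). The syndrome graph $G$ has vertices $v_1,\dots,v_N$; for $i\ne j$, $v_i$ and $v_j$ are adjacent iff $\langle\bar y_i,\bar y_j\rangle=F_{ij}$; $v_i$ has a self-loop iff $\langle\bar y_i,\bar y_i\rangle = F_{ii}$. $\hat G$ is $G$ with all vertices lacking a self-loop deleted. $V'$ is the set of vertices of $\hat G$ lying in a clique (pairwise adjacent distinct vertices) of size at least $N-T$ in $\hat G$. $V^*$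 is the set of $v_i\in V'$ adjacent in $\hat G$ to every vertex of $V'$ (including itself via its self-loop). *)

(* Defs.v *)
From HB Require Import structures.
From mathcomp Require Import all_boot all_order all_algebra.
Set Implicit Arguments. Unset Strict Implicit. Unset Printing Implicit Defensive.
Import Order.TTheory GRing.Theory Num.Theory.
Local Open Scope ring_scope.

Definition dotz (n0 : nat) (u v : 'rV[int]_n0) : int := \sum_(k < n0) u 0 k * v 0 k.

Definition eligible_generator (N T : nat) (A : 'M[int]_(N, N - T)) : Prop :=
  (forall i j, 0 <= A i j) /\
  (forall (i : 'I_N) (j : 'I_(N - T)), (i < N - T)%N -> A i j = (nat_of_ord i == nat_of_ord j)%:Z) /\
  (forall f : 'I_(N - T) -> 'I_N, injective f -> \det (rowsub f A) != 0).

(* Syndrome graph: for i <> j, adjacency; for i = j, self-loop.  Y = transmitted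
   codewords (rows), Yb = received codewords (rows). F_ij = <y_i, y_j>. *)
Definition synd_adj (N n0 : nat) (Y Yb : 'M[int]_(N, n0)) (i j : 'I_N) : bool :=
  dotz (row i Yb) (row j Yb) == dotz (row i Y) (row j Y).

(* Vertices of G-hat: those having a self-loop. *)
Definition has_loop (N n0 : nat) (Y Yb : 'M[int]_(N, n0)) (i : 'I_N) : bool :=
  synd_adj Y Yb i i.

Definition is_clique_hat (N n0 : nat) (Y Yb : 'M[int]_(N, n0)) (C : {set 'I_N}) : bool :=
  [forall i in C, has_loop Y Yb i] &&
  [forall i in C, forall j in C, (i != j) ==> synd_adj Y Yb i j].

Definition Vprime (N T n0 : nat) (Y Yb : 'M[int]_(N, n0)) : {set 'I_N} :=
  [set i | has_loop Y Yb i &&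
     [exists C : {set 'I_N}, [&& i \in C, is_clique_hat Y Yb C & (N - T <= #|C|)%N]]].

Definition Vstar (N T n0 : nat) (Y Yb : 'M[int]_(N, n0)) : {set 'I_N} :=
  [set i in Vprime T Y Yb | [forall j in Vprime T Y Yb, synd_adj Y Yb i j]].

(* Main.v *)
Require Import Defs.
From HB Require Import structures.
From mathcomp Require Import all_boot all_order all_algebra.
From mathcomp Require Import zify.
Import Order.TTheory GRing.Theory Num.Theory.

Set Implicit Arguments. Unset Strict Implicit.
Local Open Scope ring_scope.
Lemma dotzE n0 (u v : 'rV[int]_n0) : dotz u v = (u *m v^T) 0 0.
Proof. by rewrite /dotz !mxE; apply: eq_bigr => k _; rewrite !mxE. Qed.

Lemma dotzC n0 (u v : 'rV[int]_n0) : dotz u v = dotz v u.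
Proof. by rewrite /dotz; apply: eq_bigr => k _; rewrite mulrC. Qed.

Lemma dotzDl n0 (u v w : 'rV[int]_n0) : dotz (u + v) w = dotz u w + dotz v w.
Proof. by rewrite !dotzE mulmxDl mxE. Qed.

Lemma dotzBl n0 (u v w : 'rV[int]_n0) : dotz (u - v) w = dotz u w - dotz v w.
Proof. by rewrite !dotzE mulmxBl !mxE. Qed.

Lemma dotz_self0 n0 (u : 'rV[int]_n0) : dotz u u = 0 -> u = 0.
Proof.
rewrite /dotz => h; apply/matrixP => r k; rewrite ord1 mxE.
have hk : u 0 k * u 0 k = 0.
  apply: (psumr_eq0P (P := fun _ => true) (F := fun k => u 0 k * u 0 k)) => //.
  by move=> l _; rewrite -expr2 sqr_ge0.
by move/eqP: hk; rewrite mulf_eq0 orbb => /eqP.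
Qed.

Lemma la_key (N T N0 : nat) (A : 'M[int]_(N, N - T)) (X : 'M[int]_(N - T, N0))
  (Yb : 'M[int]_(N, N0)) (hA : eligible_generator A) (i : 'I_N) (W : {set 'I_N}) :
  has_loop (A *m X) Yb i -> (N - T <= #|W|)%N ->
  (forall j, j \in W -> row j Yb = row j (A *m X)) ->
  (forall j, j \in W -> synd_adj (A *m X) Yb i j) ->
  row i Yb = row i (A *m X).
Proof.
move=> hl hW hgood hadj.
case: hA => _ [_ hdet].
set Y := A *m X.
set d := row i Yb - row i Y.
have hj : forall j, j \in W -> dotz d (row j Y) = 0.
  move=> j jW; have := hadj j jW; rewrite /synd_adj (hgood j jW) => /eqP h.
  by rewrite /d dotzBl h subrr.
pose f (k : 'I_(N - T)) : 'I_N := enum_val (widen_ord hW k).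
have finj : injective f.
  by move=> k1 k2 /enum_val_inj /(congr1 val) /= h; apply: val_inj.
have fW : forall k, f k \in W by move=> k; apply: enum_valP.
set w := d *m X^T.
have hw : forall j, j \in W -> (w *m (row j A)^T) 0 0 = 0.
  move=> j jW; rewrite -(hj j jW) dotzE /Y row_mul trmx_mul /w mulmxA //.
have wP : w *m (rowsub f A)^T = 0.
  apply/matrixP => r k; rewrite ord1 [RHS]mxE -(hw _ (fW k)) !mxE.
  by apply: eq_bigr => l _; rewrite !mxE.
have w0 : w = 0.
  have := congr1 (fun M => M *m \adj (rowsub f A)^T) wP.
  rewrite /= -mulmxA mul_mx_adj mul0mx mul_mx_scalar det_tr => hs.
  apply/matrixP => r k; move/matrixP: hs => /(_ r k).
  rewrite !mxE => /eqP; rewrite mulf_eq0 (negbTE (hdet f finj)) /= => /eqP.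
  by [].
have dy : dotz d (row i Y) = 0.
  by rewrite dotzE /Y row_mul trmx_mul mulmxA -/w w0 mul0mx mxE.
have hyb : row i Yb = row i Y + d by rewrite /d addrC subrK.
clearbody d; move: hl; rewrite /has_loop /synd_adj -/Y hyb => /eqP.
rewrite !dotzDl ![dotz _ (_ + _)]dotzC !dotzDl [dotz (row i Y) d]dotzC dy.
rewrite addr0 add0r => /eqP; rewrite -subr_eq0 [_ + dotz d d]addrC addrK => /eqP /dotz_self0 d0.
by rewrite d0 addr0.
Qed.

Local Close Scope ring_scope.

Lemma comb_step (I : finType) (E' : {set I}) (D S : I -> {set I}) (a M : nat)
  (hD : forall e, e \in E' -> a <= #|D e|)
  (hSe : forall e, e \in E' -> e \in S e)
  (hSE : forall e, e \in E' -> S e \subset E')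
  (hH : forall e, e \in E' -> #|\bigcup_(x in S e) D x| + 1 <= a + #|S e|)
  (hSM : forall e, e \in E' -> #|S e| <= M + 1)
  (haM : a <= M) (hM1 : 1 <= M) (R : {set I}) e : R \subset E' -> e \in E' -> e \notin R ->
  #|\bigcup_(x in R :|: S e) D x| + M * #|R| <=
  #|\bigcup_(x in R) D x| + M * #|R :|: S e|.
Proof.
move=> sRE eE eR.
rewrite bigcup_setU.
set UR := \bigcup_(x in R) D x; set H := \bigcup_(x in S e) D x.
have hU := cardsUI UR H.
have hRS := cardsUI R (S e).
have hRSle : #|R :&: S e| + 1 <= #|S e|.
  have : R :&: S e \proper S e.
    rewrite properE subsetIr /=; apply/subsetPn; exists e; first exact: hSe.
    by rewrite inE (negbTE eR).
  by move/proper_card; lia.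
have hHle : #|H| + 1 <= a + #|S e| := hH _ eE. have hSMe := hSM _ eE.
case: (set_0Vmem (R :&: S e)) => [R0|[e' He']].
  rewrite R0 cards0 in hRS hRSle.
  have hHM : #|H| <= M * #|S e|.
    have : a + #|S e| <= M * #|S e| + 1.
      case: #|S e| hRSle => // s' _; rewrite mulnS; nia.
    lia.
  have : #|R :|: S e| = #|R| + #|S e| by lia.
  move=> ->; rewrite mulnDr; lia.
have e'R : e' \in R by move: He'; rewrite inE => /andP[].
have e'S : e' \in S e by move: He'; rewrite inE => /andP[].
have e'E : e' \in E' by apply: (subsetP sRE).
have hDe := hD _ e'E.
have : D e' \subset UR :&: H.
  by rewrite subsetI (bigcup_sup e' e'R) (bigcup_sup e' e'S).
move/subset_leq_card => hc.
have hH2 : #|UR :|: H| + a <= #|UR| + #|S e| - 1 + a by lia.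
have : M * #|R| + M <= M * #|R :|: S e|.
  rewrite -mulnSr; apply: leq_mul => //; lia.
lia.
Qed.

Lemma comb_main (I : finType) (E' : {set I}) (D S : I -> {set I}) (a M : nat)
  (hD : forall e, e \in E' -> a <= #|D e|)
  (hSe : forall e, e \in E' -> e \in S e)
  (hSE : forall e, e \in E' -> S e \subset E')
  (hH : forall e, e \in E' -> #|\bigcup_(x in S e) D x| + 1 <= a + #|S e|)
  (hSM : forall e, e \in E' -> #|S e| <= M + 1)
  (haM : a <= M) (hM1 : 1 <= M) : forall R : {set I}, R \subset E' ->
  #|\bigcup_(x in E') D x| + M * #|R| <= #|\bigcup_(x in R) D x| + M * #|E'|.
Proof.
suff: forall n (R : {set I}), R \subset E' -> #|E'| - #|R| <= n ->
  #|\bigcup_(x in E') D x| + M * #|R| <= #|\bigcup_(x in R) D x| + M * #|E'|.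
  by move=> h R sR; apply: (h _ R sR (leqnn _)).
elim=> [|n IH] R sR hn.
  have : R == E' by rewrite eqEcard sR; lia.
  by move/eqP->.
case: (boolP (E' \subset R)) => [sER|].
  have : R == E' by rewrite eqEcard sR (subset_leq_card sER).
  by move/eqP->.
case/subsetPn=> e eE eR.
have sR' : R :|: S e \subset E' by rewrite subUset sR hSE.
have hlt : #|R| < #|R :|: S e|.
  apply: proper_card; rewrite properE subsetUl /=; apply/subsetPn; exists e; last by [].
  by rewrite inE hSe // orbT.
have := IH _ sR'. have := comb_step hD hSe hSE hH hSM haM hM1 sR eE eR.
have := subset_leq_card sR'.
move=> h1 h2 h3; have := h3 ltac:(lia).
nia.
Qed.

Lemma xy_le (x y T : nat) : x + y = T -> x * y <= T ^ 2 %/ 4.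
Proof.
move=> <-; rewrite leq_divRL //.
case: (leqP x y) => h.
  have [t ->] : exists t, y = x + t by exists (y - x); lia.
  nia.
have [t ->] : exists t, x = y + t by exists (x - y); lia.
nia.
Qed.

Lemma arith (N T m k s U Us : nat) : 1 <= s -> s <= k -> k <= m -> m <= T ->
  T + T ^ 2 %/ 4 + 2 <= N ->
  U + maxn (T - m + 1) (s - 1) * s <= Us + maxn (T - m + 1) (s - 1) * k ->
  Us + 1 <= (T - m + 1) + s ->
  N - T - T ^ 2 %/ 4 - 1 <= (N - m) - U.
Proof.
move=> h1 h2 h3 h4 hN hU hUs.
set q := T ^ 2 %/ 4 in hN *.
suff : U <= T - m + 1 + q by lia.
case: (leqP (s - 1) (T - m + 1)) => hc.
  rewrite (maxn_idPl hc) in hU.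
  have := @xy_le (m - 1) (T - m + 1) T ltac:(lia).
  rewrite -/q => hq.
  have : (T - m + 1) * s + (T - m + 1) * (k - s) = (T - m + 1) * k.
    by rewrite -mulnDr; congr (_ * _); lia.
  have : (T - m + 1) * (k - 1) <= (T - m + 1) * (m - 1) by apply: leq_mul; lia.
  have : (s - 1) <= (T - m + 1) * (s - 1) by apply: leq_pmull; lia.
  have : (T - m + 1) * (s - 1) + (T - m + 1) * (k - s) = (T - m + 1) * (k - 1).
    by rewrite -mulnDr; congr (_ * _); lia.
  lia.
rewrite (maxn_idPr (ltnW hc)) in hU.
have := @xy_le (s - 1) (T - s + 1) T ltac:(lia).
rewrite -/q => hq.
have : (s - 1) * s + (s - 1) * (k - s) = (s - 1) * k.
  by rewrite -mulnDr; congr (_ * _); lia.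
have : (s - 1) * (k - s + 1) <= (s - 1) * (T - s + 1) by apply: leq_mul; lia.
have : (s - 1) * (k - s) + (s - 1) = (s - 1) * (k - s + 1).
  by rewrite mulnDr muln1.
lia.
Qed.

Unset Implicit Arguments. Set Strict Implicit.
Local Open Scope ring_scope.

Theorem theorem2 (N T N0 : nat) (hN0 : (1 <= N0)%N) (hT : (1 <= T)%N)
  (hN : (T + T ^ 2 %/ 4 + 2 <= N)%N)
  (A : 'M[int]_(N, N - T)) (hA : eligible_generator A)
  (X : 'M[int]_(N - T, N0)) (Yb : 'M[int]_(N, N0)) (B : {set 'I_N})
  (hB : (#|B| <= T)%N)
  (hYb : forall i : 'I_N, i \notin B -> row i Yb = row i (A *m X)) :
  (N - T - T ^ 2 %/ 4 - 1 <= #|Vstar T (A *m X) Yb|)%N /\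
  (forall i : 'I_N, i \in Vstar T (A *m X) Yb -> row i Yb = row i (A *m X)).
Proof.
have hla := @la_key N T N0 A X Yb hA.
set Y := A *m X in hla hYb *.
have adjC : forall i j, synd_adj Y Yb i j = synd_adj Y Yb j i.
  by move=> i j; rewrite /synd_adj dotzC [dotz (row i Y) _]dotzC.
set G := [set i | row i Yb == row i Y].
set E := ~: G.
have EB : E \subset B.
  apply/subsetP => i; rewrite !inE; apply: contraR => iB.
  by rewrite hYb.
have hm : (#|E| <= T)%N by apply: leq_trans (subset_leq_card EB) hB.
have hcard : (#|G| + #|E| = N)%N by rewrite cardsC card_ord.
have hG : (N - T <= #|G|)%N by lia.
have gadj : forall i j, i \in G -> j \in G -> synd_adj Y Yb i j.
  by move=> i j; rewrite !inE => /eqP hi /eqP hj; rewrite /synd_adj hi hj.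
have GV : G \subset Vprime T Y Yb.
  apply/subsetP => i iG; rewrite inE; apply/andP; split; first exact: gadj.
  apply/existsP; exists G; rewrite iG /=; apply/andP; split; last exact: hG.
  apply/andP; split; apply/forallP => x; apply/implyP => xG.
    exact: gadj.
  by apply/forallP => y; apply/implyP => yG; apply/implyP => _; apply: gadj.
have hla' : forall (i : 'I_N) (W : {set 'I_N}), has_loop Y Yb i -> (N - T <= #|W|)%N -> W \subset G ->
    (forall j, j \in W -> synd_adj Y Yb i j) -> i \in G.
  move=> i W hl hW sWG hadj; rewrite inE; apply/eqP; apply: hla hl hW _ hadj.
  by move=> j /(subsetP sWG); rewrite inE => /eqP.
have VsG : Vstar T Y Yb \subset G.
  apply/subsetP => i; rewrite inE => /andP [iV /forallP hall].
  move: iV; rewrite inE => /andP [hl _].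
  apply: (hla' i G hl hG (subxx _)).
  by move=> j jG; have := hall j; rewrite (subsetP GV j jG).
split; last first.
  by move=> i /(subsetP VsG); rewrite inE => /eqP.
set Vp := Vprime T Y Yb.
set E' := Vp :&: E.
pose D (e : 'I_N) := G :\: [set g | synd_adj Y Yb e g].
pose S (e : 'I_N) : {set 'I_N} :=
  if [pick C : {set 'I_N} | [&& e \in C, is_clique_hat Y Yb C & (N - T <= #|C|)%N]]
  is Some C then C :&: E else set0.
have hSC : forall e, e \in Vp -> exists C : {set 'I_N},
    [/\ S e = C :&: E, e \in C, is_clique_hat Y Yb C & (N - T <= #|C|)%N].
  move=> e; rewrite inE => /andP [_ /existsP [C0 hC0]].
  rewrite /S; case: pickP => [C hC | hn]; last by have := hn C0; rewrite hC0.
  by exists C; case/and3P: hC.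
pose a := (#|G| + 1 - (N - T))%N.
have hE'E : E' \subset E by apply: subsetIr.
have hDa : forall e, e \in E' -> (a <= #|D e|)%N.
  move=> e; rewrite inE => /andP [eV eE].
  have hl : has_loop Y Yb e by move: eV; rewrite inE => /andP [].
  have hsplit := cardsID [set g | synd_adj Y Yb e g] G.
  suff : (#|G :&: [set g | synd_adj Y Yb e g]| < N - T)%N.
    move=> hlt; rewrite /a /D; move: hsplit hcard hm hlt; clear; lia.
  rewrite ltnNge; apply/negP => hW.
  have : e \in G.
    apply: (hla' e _ hl hW (subsetIl _ _)) => j; rewrite !inE => /andP [_ //].
  by move: eE; rewrite inE => /negP.
have hSe : forall e, e \in E' -> e \in S e.
  move=> e eE'; have := eE'; rewrite inE => /andP [eV eE].
  by have [C [-> eC _ _]] := hSC e eV; rewrite inE eC.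
have hSE : forall e, e \in E' -> S e \subset E'.
  move=> e eE'; have := eE'; rewrite inE => /andP [eV eE].
  have [C [-> eC hcl hC]] := hSC e eV.
  apply/subsetP => x; rewrite !inE => /andP [xC xE]; rewrite xE andbT.
  have xl : has_loop Y Yb x.
    by case/andP: hcl => /forallP /(_ x) /implyP /(_ xC).
  rewrite xl /=; apply/existsP; exists C; rewrite xC hcl; exact: hC.
have hH : forall e, e \in E' -> (#|\bigcup_(x in S e) D x| + 1 <= a + #|S e|)%N.
  move=> e eE'; have := eE'; rewrite inE => /andP [eV eE].
  have [C [hS eC hcl hC]] := hSC e eV.
  have sub : \bigcup_(x in S e) D x \subset G :\: C.
    apply/bigcupsP => x; rewrite hS inE => /andP [xC xE].
    apply/subsetP => g; rewrite !inE => /andP [hng gG]; rewrite gG andbT.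
    apply/negP => gC; move/negP: hng; apply.
    case/andP: hcl => _ /forallP /(_ x) /implyP /(_ xC) /forallP /(_ g) /implyP /(_ gC).
    move/implyP; apply; apply/negP => /eqP xg.
    by move: xE; rewrite xg !inE gG.
  have h1 := subset_leq_card sub.
  have h2 := cardsID C G.
  have h3 := cardsID G C.
  have h4 : #|C :\: G| = #|S e|.
    by rewrite hS setDE.
  have h5 : #|G :&: C| = #|C :&: G| by rewrite setIC.
  rewrite /a; move: h1 h2 h3 h4 h5 hC hcard hm; clear.
  set x1 := #|\bigcup_(x in S e) D x|; set x2 := #|G :\: C|; set x3 := #|G :&: C|.
  set x4 := #|G|; set x5 := #|C :&: G|; set x6 := #|C :\: G|; set x7 := #|C|.
  set x8 := #|S e|; set x9 := #|E|.
  lia.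
set U := \bigcup_(x in E') D x.
have sub : G :\: U \subset Vstar T Y Yb.
  apply/subsetP => g; rewrite in_setD => /andP [gU gG].
  rewrite inE (subsetP GV g gG) /=; apply/forallP => j; apply/implyP => jV.
  case: (boolP (j \in G)) => jG; first exact: gadj.
  have jE' : j \in E' by rewrite inE jV inE jG.
  rewrite adjC; apply/negPn/negP => hn.
  move/negP: gU; apply; apply/bigcupP; exists j => //.
  by rewrite /D in_setD inE hn gG.
have hVs : (#|G| - #|U| <= #|Vstar T Y Yb|)%N.
  apply: leq_trans (subset_leq_card sub); rewrite cardsD.
  by apply: leq_sub2l; apply: subset_leq_card; apply: subsetIr.
case: (set_0Vmem E') => [E0 | [e1 e1E]].
  move: hVs; rewrite /U E0 big_set0 cards0 subn0 => hVs.
  move: hVs hG hN; clear; set x1 := #|G|; set x2 := #|Vstar T Y Yb|; set q := (T ^ 2 %/ 4)%N; lia.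
case: (@arg_maxnP _ e1 (mem E') (fun e => #|S e|) e1E) => e0 e0E hmax.
pose M := maxn a (#|S e0| - 1).
have ha : a = (T - #|E| + 1)%N.
  rewrite /a; move: hcard hm hN; clear; set x1 := #|G|; set x2 := #|E|; set q := (T ^ 2 %/ 4)%N; lia.
have hSM : forall e, e \in E' -> (#|S e| <= M + 1)%N.
  move=> e eE; have := hmax e eE; rewrite /M => h.
  have := leq_maxr a (#|S e0| - 1); lia.
have haM : (a <= M)%N by apply: leq_maxl.
have hM1 : (1 <= M)%N.
  by apply: leq_trans (leq_maxl _ _); rewrite /a; move: hG; clear; set x1 := #|G|; lia.
have hc := comb_main hDa hSe hSE hH hSM haM hM1 (hSE e0 e0E).
have hs1 : (1 <= #|S e0|)%N by apply/card_gt0P; exists e0; apply: hSe.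
have hsk : (#|S e0| <= #|E'|)%N by apply: subset_leq_card; apply: hSE.
have hkm : (#|E'| <= #|E|)%N by apply: subset_leq_card.
have hHe0 := hH e0 e0E.
rewrite /M ha in hc; rewrite ha in hHe0.
have := @arith _ _ _ _ _ _ _ hs1 hsk hkm hm hN hc hHe0.
move: hVs hcard; clear.
set x1 := #|G|; set x2 := #|Vstar T Y Yb|; set x3 := #|U|; set x4 := #|E|.
lia.
Qed.
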